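(* Let $E$ be a nonempty directed graph with no source vertices, and $n$ a positive integer. Then $\mathcal S(E)$ is strongly $\mathbb Z/n\mathbb Z$-graded via $\phi:\mathcal S(E)\setminus\{0\}\to\mathbb Z/n\mathbb Z$, $\phi(xy^{-1})=(|x|-|y|)+n\mathbb Z$.
   Context: A directed graph $E=(E^0,E^1,\mathbf r,\mathbf s)$; a vertex $v$ is a source if $\mathbf r^{-1}(v)=\emptyset$; paths are finite sequences of edges $e_1\cdots e_n$ with $\mathbf r(e_i)=\mathbf s(e_{i+1})$ (vertices have length 0), $|x|$ is length. $\mathcal S(E)$ is the semigroup with zero generated by $E^0\cup E^1\cup\{e^{-1}:e\in E^1\}$ subject to $vw=\delta_{v,w}v$, $\mathbf s(e)e=e\mathbf r(e)=e$, $\mathbf r(e)e^{-1}=e^{-1}\mathbf s(e)=e^{-1}$, $e^{-1}f=\delta_{e,f}\mathbf r(e)$; nonzero elements are uniquely $xy^{-1}$ with paths $x,y$, $\mathbf r(x)=\mathbf r(y)$. A $\Gamma$-grading is a map $\phi:S\setminus\{0\}\to\Gamma$ with $\phi(st)=\phi(s)\phi(t)$ when $st\neq0$, $S_\alpha=\phi^{-1}(\alpha)\cup\{0\}$; it is strong if $S_\alpha S_\beta=S_{\alpha\beta}$ for all $\alpha,\beta$. *)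

(* Defs.v *)
From HB Require Import structures.
From mathcomp Require Import all_boot all_algebra.
Set Implicit Arguments. Unset Strict Implicit. Unset Printing Implicit Defensive.
Import GRing.Theory.

(** Generic notions: a semigroup with zero given by a carrier predicate [wf],
    a zero [z] and a multiplication [mul]; a grading [phi] into a group with
    operation [op]. *)
Section Grading.
Variables (S G : Type) (wf : S -> Prop) (z : S) (mul : S -> S -> S)
          (op : G -> G -> G) (phi : S -> G).

Definition is_grading : Prop :=
  forall s t, wf s -> wf t -> s <> z -> t <> z -> mul s t <> z ->
    phi (mul s t) = op (phi s) (phi t).

Definition component (a : G) (s : S) : Prop :=
  wf s /\ (s = z \/ (s <> z /\ phi s = a)).

(** strong: S_a S_b = S_{ab} (equality of sets of elements) *)
Definition is_strong_grading : Prop :=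
  is_grading /\
  forall a b s, component (op a b) s <->
    exists t u, component a t /\ component b u /\ s = mul t u.
End Grading.

Section GraphInverseSemigroup.
Variables (V E : eqType) (src rng : E -> V).

(** a path: starting vertex together with a list of edges e1 ... en;
    the vertex v alone (empty edge list) is the path of length 0 *)
Definition gpath := (V * seq E)%type.

Definition valid_path (p : gpath) : bool :=
  (if p.2 is e :: _ then src e == p.1 else true) &&
  sorted (fun e f => rng e == src f) p.2.

Definition prange (p : gpath) : V := last p.1 (map rng p.2).
Definition plen (p : gpath) : nat := size p.2.

(** elements of S(E): None is 0, Some (x, y) is x y^{-1} *)
Definition gis := option (gpath * gpath).

Definition gis_wf (s : gis) : Prop :=
  if s is Some (x, y) then
    [&& valid_path x, valid_path y & prange x == prange y]
  else True.

(** (x y^{-1})(z w^{-1}) = x p w^{-1} if z = y p;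
                        = x (w q)^{-1} if y = z q;  0 otherwise *)
Definition gis_mul (s t : gis) : gis :=
  match s, t with
  | Some (x, y), Some (z, w) =>
      if (y.1 == z.1) && prefix y.2 z.2 then
        Some ((x.1, x.2 ++ drop (size y.2) z.2), w)
      else if (z.1 == y.1) && prefix z.2 y.2 then
        Some (x, (w.1, w.2 ++ drop (size z.2) y.2))
      else None
  | _, _ => None
  end.

(** phi(x y^{-1}) = (|x| - |y|) + nZ, with n = k.+1 *)
Definition gis_phi (k : nat) (s : gis) : 'I_k.+1 :=
  if s is Some (x, y) then (inZp (plen x) - inZp (plen y))%R else 0%R.
End GraphInverseSemigroup.

(* Main.v *)
Require Import Defs.
From mathcomp Require Import all_boot all_algebra.
Import GRing.Theory.
Local Open Scope ring_scope.

Lemma inZpD k (m n : nat) : (inZp (m + n) = inZp m + inZp n :> 'I_k.+1)%R.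
Proof. by apply: val_inj; rewrite /= modnDm. Qed.

Lemma zm1 (T : zmodType) (X Y D W : T) : (X + D - W = (X - Y) + (Y + D - W))%R.
Proof. by rewrite addrA (addrA (X - Y)) subrK. Qed.

Lemma zm2 (T : zmodType) (X Z D W : T) : (X - (W + D) = (X - (Z + D)) + (Z - W))%R.
Proof. rewrite !opprD !addrA. by rewrite (addrAC (X - Z)) subrK addrAC. Qed.

Lemma zm3 (T : zmodType) (X Y a b : T) : X - Y = a + b -> (X - a) - Y = b.
Proof. by move=> H; rewrite addrAC H addrAC subrr add0r. Qed.

Lemma back_paths (V E : eqType) (src rng : E -> V) :
  (forall v : V, exists e : E, rng e = v) ->
  forall m v, exists p : gpath V E, [/\ valid_path src rng p, prange rng p = v & plen p = m].
Proof.
move=> hs; elim=> [|m IH] v.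
  by exists (v, [::]); rewrite /valid_path /prange /plen.
have [[u l] [hv hr hl]] := IH v.
have [e he] := hs u.
exists (src e, e :: l); split.
- move: hv; rewrite /valid_path /= eqxx /=.
  case: l hr hl => [|f l] //= _ _ /andP [/eqP -> ->]; by rewrite he eqxx.
- by move: hr; rewrite /prange /= he.
- by rewrite /plen /= -hl.
Qed.

Lemma valid_cons (V E : eqType) (src rng : E -> V) v e l :
  valid_path src rng (v, e :: l) = (src e == v) && valid_path src rng (rng e, l).
Proof. by case: l => [|f l]; rewrite /valid_path /= // (eq_sym (src f)). Qed.

Lemma valid_cat (V E : eqType) (src rng : E -> V) l1 v l2 :
  valid_path src rng (v, l1 ++ l2) =
  valid_path src rng (v, l1) && valid_path src rng (prange rng (v, l1), l2).
Proof.
elim: l1 v => [|e l1 IH] v /=; first by [].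
by rewrite !valid_cons IH andbA.
Qed.

Lemma prange_cat (V E : eqType) (rng : E -> V) l1 v l2 :
  prange rng (v, l1 ++ l2) = prange rng (prange rng (v, l1), l2).
Proof. by rewrite /prange /= map_cat last_cat. Qed.

Theorem lemma8p7 (V E : eqType) (src rng : E -> V) (k : nat) :
  (exists v : V, True) ->
  (forall v : V, exists e : E, rng e = v) ->
  is_strong_grading (@gis_wf V E src rng) None (@gis_mul V E)
    (fun a b : 'I_k.+1 => (a + b)%R) (@gis_phi V E k).
Proof.
move=> _ hs.
have grad : is_grading (@gis_wf V E src rng) None (@gis_mul V E) (fun a b : 'I_k.+1 => (a + b)%R) (@gis_phi V E k).
  move=> [[[x1 x2] [y1 y2]]|] [[[z1 z2] [w1 w2]]|] //= _ _ _ _.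
  case: ifP => [/andP [_ /prefixP [d ->]] _|_].
    by rewrite drop_size_cat // /gis_phi /plen /= !size_cat !inZpD (zm1 _ _ (inZp (size y2))).
  case: ifP => [/andP [_ /prefixP [d ->]] _|//].
  by rewrite drop_size_cat // /gis_phi /plen /= !size_cat !inZpD (zm2 _ _ (inZp (size z2))).
split=> // a b s; split.
- move=> [ws [->|[sn hp]]].
    by exists None, None; do !split; left.
  case: s ws sn hp => [[x y]|] //= /and3P [vx vy /eqP rxy] _ hp.
  have [q [vq rq lq]] := @back_paths V E src rng hs (inZp (plen x) - a)%R (prange rng x).
  exists (Some (x, q)), (Some (q, y)); split; [|split].
  + split; first by rewrite /= vx vq rq eqxx.
    right; split=> //=.
    by rewrite lq valZpK opprB addrC subrK.
  + split; first by rewrite /= vy vq rq rxy eqxx.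
    right; split=> //=.
    by rewrite lq valZpK; apply: zm3.
  + rewrite /= !eqxx prefix_refl /= drop_size cats0.
    by rewrite -surjective_pairing.
- move=> [t [u [[wt ht] [[wu hu] ->]]]].
  split.
    case: t u wt wu {ht hu} => [[[x1 x2] [y1 y2]]|] [[[z1 z2] [w1 w2]]|] //=.
    move=> /and3P [vx vy /eqP rxy] /and3P [vz vw /eqP rzw].
    case: ifP => [/andP [/eqP e1 /prefixP [d ed]] |_].
      subst z1 z2; rewrite drop_size_cat //.
      move: vz; rewrite valid_cat => /andP [_ vd].
      rewrite /= valid_cat vx vw rxy vd /= prange_cat rxy.
      by rewrite -prange_cat rzw.
    case: ifP => [/andP [/eqP e1 /prefixP [d ed]] |//].
    subst y1 y2; rewrite drop_size_cat //.
    move: vy; rewrite valid_cat => /andP [_ vd].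
    by rewrite /= valid_cat vx vw -rzw vd /= prange_cat -rzw -prange_cat rxy.
  case: (eqVneq (gis_mul t u) None) => [->|/eqP hn]; [by left|right; split=> //=].
  case: ht => [ht|[tn ht]]; first by move: hn; rewrite ht.
  case: hu => [hu|[un hu]]; first by move: hn; rewrite hu; case: (t) => [[]|].
  rewrite -ht -hu; exact: grad.
Qed.
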